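(* Let $A=\{p_1,\ldots,p_n\}$ be a pseudo-instance of the Pinwheel Scheduling problem (a finite multiset of positive real periods) with $p_i\ge 2$ for all $i$ and density $\rho(A)=\sum_i 1/p_i\le 7/12$. Apply to $A$ the algorithm of Chan and Chin described in the context (specialization with respect to $\{2,3\}$ followed by normalization), producing multisets $B'$ and $C'$ of positive integers. Then the Pinwheel Scheduling instance $B'\cup C'$ is schedulable.
   Context: Pinwheel Scheduling (PS): an instance is a finite multiset of positive integer periods $q_1,\ldots,q_n$ (one per job). A schedule assigns at most one job to each day $1,2,3,\ldots$ (perpetually); it is feasible if every job $i$ is scheduled at least once in every window of $q_i$ consecutive days. The instance is schedulable if a feasible schedule exists. A pseudo-instance is a multiset of positive reals $p_i$; its density is $\rho(A)=\sum_i 1/p_i$, and the density of any multiset $X$ of periods is $\rho(X)=\sum_{p\in X}1/p$ (with $\rho(\emptyset)=0$). Specialization: specializing a multiset of periods with respect to $\{x\}$ ($x$ a positive integer) means rounding each period down to the largest element of $\{x2^j: j\ge 0 \text{ integer}\}$ not exceeding it. The algorithm: split $A=A_2\cup A_3$, where $A_2=\{p_i: 2\cdot 2^j\le p_i<3\cdot 2^j \text{ for some integer } j\ge 0\}$ and $A_3=\{p_i: 3\cdot 2^j\le p_i<2\cdot 2^{j+1}\text{ for some integer } j\ge 0\}$. Let $B$ be the specialization of $A_2$ with respect to $\{2\}$ and $C$ the specialization of $A_3$ with respect to $\{3\}$. Let $r=\lfloor 2\rho(B)\rfloor$ and $s=\lfloor 3\rho(C)\rfloor$, and choose sub-multisets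 $P\subseteq B$, $Q\subseteq C$ with $\rho(B\setminus P)=r/2$ and $\rho(C\setminus Q)=s/3$, so that $\rho(B)=r/2+\rho(P)$ with $0\le\rho(P)<1/2$ and $\rho(C)=s/3+\rho(Q)$ with $0\le \rho(Q)<1/3$. If $\rho(P)+\rho(Q)=0$, set $B'=B$, $C'=C$. Otherwise apply normalization: (a) if $\tfrac43\rho(P)+\rho(Q)\le \tfrac13$: specialize $P$ with respect to $\{3\}$ and move it from $B$ to $C$; (b) if $\tfrac13<\tfrac43\rho(P)+\rho(Q)\le\tfrac23$ and $\rho(P)+\tfrac32\rho(Q)\le\tfrac12$: specialize $Q$ with respect to $\{2\}$ and move it from $C$ to $B$; (c) if $\tfrac13<\tfrac43\rho(P)+\rho(Q)\le\tfrac23$ and $\rho(P)+\tfrac32\rho(Q)>\tfrac12$: specialize $P$ with respect to $\{3\}$ and move it from $B$ to $C$; (d) if $\tfrac43\rho(P)+\rho(Q)>\tfrac23$: make no change. $B'$ and $C'$ denote $B$ and $C$ after normalization. *)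

(* Defs.v *)
From HB Require Import structures.
From mathcomp Require Import all_boot all_order all_algebra.
From mathcomp Require Import reals.
Set Implicit Arguments. Unset Strict Implicit. Unset Printing Implicit Defensive.
Import Order.TTheory GRing.Theory Num.Theory.
Local Open Scope ring_scope.

(* Multisets are represented by sequences (order irrelevant). *)

Definition rhoR {R : realType} (A : seq R) : R := \sum_(p <- A) p^-1.

Definition rhoN {R : realType} (X : seq nat) : R := \sum_(q <- X) (q%:R)^-1.

(* A schedule is f : nat -> nat, day d is given to job
   f d (if f d >= size I, the day is idle), so at most one job per day. *)
Definition schedulable (I : seq nat) : Prop :=
  exists f : nat -> nat,
    forall i, (i < size I)%N -> forall t, (1 <= t)%N ->
      exists d, (t <= d < t + nth 0%N I i)%N /\ f d = i.

Definition is_spec {R : realType} (x : nat) (p : R) (q : nat) : Prop :=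
  (exists j : nat, q = (x * 2 ^ j)%N) /\ (q%:R <= p) /\
  (forall j : nat, ((x * 2 ^ j)%N)%:R <= p -> (x * 2 ^ j <= q)%N).

Definition spec_seq {R : realType} (x : nat) (A : seq R) (B : seq nat) : Prop :=
  size A = size B /\
  forall i, (i < size A)%N -> is_spec x (nth 0 A i) (nth 0%N B i).

Definition spec_seqN {R : realType} (x : nat) (A : seq nat) (B : seq nat) : Prop :=
  @spec_seq R x (map (fun q : nat => q%:R) A) B.

Definition in_A2 {R : realType} (p : R) : Prop :=
  exists j : nat, ((2 * 2 ^ j)%N)%:R <= p /\ p < ((3 * 2 ^ j)%N)%:R.
Definition in_A3 {R : realType} (p : R) : Prop :=
  exists j : nat, ((3 * 2 ^ j)%N)%:R <= p /\ p < ((2 * 2 ^ j.+1)%N)%:R.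

(* The normalization step: given B, C, the chosen split B = P + Bk
   (Bk = B \ P) and C = Q + Ck (Ck = C \ Q), (B', C') is a possible
   output of normalization. *)
Definition normalization {R : realType}
    (B C P Bk Q Ck B' C' : seq nat) : Prop :=
  let rP : R := rhoN P in
  let rQ : R := rhoN Q in
  (rP + rQ = 0 /\ B' = B /\ C' = C) \/
      (rP + rQ != 0 /\ 4/3 * rP + rQ <= 1/3 /\
        exists P', @spec_seqN R 3 P P' /\ B' = Bk /\ C' = C ++ P') \/
      (rP + rQ != 0 /\ 1/3 < 4/3 * rP + rQ /\ 4/3 * rP + rQ <= 2/3 /\
        rP + 3/2 * rQ <= 1/2 /\
        exists Q', @spec_seqN R 2 Q Q' /\ B' = B ++ Q' /\ C' = Ck) \/
      (rP + rQ != 0 /\ 1/3 < 4/3 * rP + rQ /\ 4/3 * rP + rQ <= 2/3 /\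
        1/2 < rP + 3/2 * rQ /\
        exists P', @spec_seqN R 3 P P' /\ B' = Bk /\ C' = C ++ P') \/
      (rP + rQ != 0 /\ 2/3 < 4/3 * rP + rQ /\ B' = B /\ C' = C).

(* Main.v *)
Require Import Defs.
From HB Require Import structures.
From mathcomp Require Import all_boot all_order all_algebra.
From mathcomp Require Import reals.
From mathcomp Require Import zify.
Import Order.TTheory GRing.Theory Num.Theory.
Set Implicit Arguments. Unset Strict Implicit. Unset Printing Implicit Defensive.
Local Open Scope nat_scope.

Definition classable (I : seq nat) : Prop :=
  exists m c : nat -> nat,
    (forall i, i < size I -> 0 < m i <= nth 0 I i) /\
    (forall i j d, i < size I -> j < size I ->
        d %% m i = c i %% m i -> d %% m j = c j %% m j -> i = j).

Lemma classable_sched I : classable I -> schedulable I.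
Proof.
case=> m [c [Hm Hd]].
exists (fun d => find (fun i => d %% m i == c i %% m i) (iota 0 (size I))).
move=> i Hi t Ht.
have /andP [m0 mle] := Hm i Hi.
set k := (c i %% m i + (m i - t %% m i)) %% m i.
exists (t + k); split.
- rewrite leq_addr /= ltn_add2l.
  exact: (leq_trans (ltn_pmod _ m0) mle).
- have Hk : (t + k) %% m i = c i %% m i.
    rewrite /k modnDmr.
    have tm := ltn_pmod t m0.
    have -> : t + (c i %% m i + (m i - t %% m i)) = (t %/ m i).+1 * m i + c i %% m i.
      rewrite {1}(divn_eq t (m i)) mulSn; lia.
    by rewrite modnMDl modn_mod.
  set p := (fun i0 => (t + k) %% m i0 == c i0 %% m i0).
  have hh : has p (iota 0 (size I)).
    by apply/hasP; exists i; rewrite ?mem_iota //= /p Hk.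
  have := nth_find 0 hh; rewrite has_find size_iota in hh.
  rewrite nth_iota // add0n /p => /eqP Hj.
  exact: (Hd _ _ (t + k) hh Hi Hj Hk).
Qed.

Lemma classable_perm I J : classable I -> perm_eq I J -> classable J.
Proof.
case=> m [c [Hm Hd]] pIJ.
have /(perm_iotaP 0) [Is pIs ->] : perm_eq J I by rewrite perm_sym.
exists (fun j => m (nth 0 Is j)), (fun j => c (nth 0 Is j)).
have ltI : forall j, j < size Is -> nth 0 Is j < size I.
  move=> j Hj; have : nth 0 Is j \in iota 0 (size I) by rewrite -(perm_mem pIs) mem_nth.
  by rewrite mem_iota.
have uIs : uniq Is by rewrite (perm_uniq pIs) iota_uniq.
rewrite size_map; split.
- move=> j Hj; rewrite (nth_map 0) //; exact: Hm (ltI _ Hj).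
- move=> i j d Hi Hj Hdi Hdj; have := Hd _ _ d (ltI _ Hi) (ltI _ Hj) Hdi Hdj.
  by move/eqP; rewrite nth_uniq // => /eqP.
Qed.

Lemma classable_drop x I : classable (x :: I) -> classable I.
Proof.
case=> m [c [Hm Hd]]; exists (fun i => m i.+1), (fun i => c i.+1); split.
- by move=> i Hi; exact: (Hm i.+1).
- by move=> i j d Hi Hj H1 H2; have [] := Hd i.+1 j.+1 d Hi Hj H1 H2.
Qed.

Lemma classable_weaken I J : classable I -> size I = size J ->
  (forall i, i < size I -> nth 0 I i <= nth 0 J i) -> classable J.
Proof.
case=> m [c [Hm Hd]] Hs Hle; exists m, c; split; rewrite -Hs //.
move=> i Hi; have /andP [h1 h2] := Hm i Hi; rewrite h1 /=.
exact: leq_trans h2 (Hle i Hi).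
Qed.

Lemma mod2_mod m d c : d %% (2 * m) = c %% (2 * m) -> d %% m = c %% m.
Proof.
move=> H.
have dv : m %| 2 * m by apply: dvdn_mull.
by rewrite -(modn_dvdm d dv) H (modn_dvdm c dv).
Qed.

Lemma classable_split q I : classable (q :: I) -> classable (2 * q :: 2 * q :: I).
Proof.
case=> m [c [Hm Hd]].
exists (fun i => match i with 0 => 2 * m 0 | 1 => 2 * m 0 | k.+2 => m k.+1 end).
exists (fun i => match i with 0 => c 0 | 1 => c 0 + m 0 | k.+2 => c k.+1 end).
have /andP [m0 mq] := Hm 0 isT.
split.
- case=> [|[|k]] /= Hk.
  + by rewrite muln_gt0 m0 leq_mul2l.
  + by rewrite muln_gt0 m0 leq_mul2l.
  + exact: (Hm k.+1).
- have cm : (c 0 + m 0) %% m 0 = c 0 %% m 0 by rewrite modnDr.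
  have ne : forall d, d %% (2 * m 0) = c 0 %% (2 * m 0) ->
             d %% (2 * m 0) = (c 0 + m 0) %% (2 * m 0) -> False.
    move=> d -> /eqP; rewrite -{1}[c 0]addn0 eqn_modDl mod0n modn_small; last by lia.
    by rewrite eq_sym (gtn_eqF m0).
  have H0 : forall j d, j < size I -> d %% (2 * m 0) = c 0 %% (2 * m 0) ->
      d %% m j.+1 = c j.+1 %% m j.+1 -> False.
    by move=> j d Hj /mod2_mod H1 H2; have := Hd 0 j.+1 d isT Hj H1 H2.
  have H1 : forall j d, j < size I -> d %% (2 * m 0) = (c 0 + m 0) %% (2 * m 0) ->
      d %% m j.+1 = c j.+1 %% m j.+1 -> False.
    move=> j d Hj /mod2_mod; rewrite cm => H1 H2; by have := Hd 0 j.+1 d isT Hj H1 H2.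
  move=> i j d; case: i => [|[|i]]; case: j => [|[|j]] /= Hi Hj Ha Hb //.
  - by exfalso; apply: (ne d).
  - by exfalso; apply: (H0 _ d _ Ha Hb).
  - by exfalso; apply: (ne d).
  - by exfalso; apply: (H1 _ d _ Ha Hb).
  - by exfalso; apply: (H0 _ d _ Hb Ha).
  - by exfalso; apply: (H1 _ d _ Hb Ha).
  by congr (_.+1); exact: (Hd i.+1 j.+1 d Hi Hj Ha Hb).
Qed.

Lemma classable_double k q I :
  classable (nseq k q ++ I) -> classable (nseq (2 * k) (2 * q) ++ I).
Proof.
elim: k I => [|k IH] I // H.
have H1 : classable (nseq k q ++ q :: I).
  apply: (classable_perm H); rewrite [nseq _ _]/= cat_cons. by rewrite -cat1s perm_catCA.
have H2 := IH _ H1.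
have H3 : classable (q :: nseq (2 * k) (2 * q) ++ I).
  apply: (classable_perm H2). by rewrite -cat1s perm_catCA.
have -> : 2 * k.+1 = (2 * k).+2 by lia.
exact: classable_split H3.
Qed.

Lemma classable_small K L : size L <= K ->
  classable (map (fun e => K * 2 ^ e) L).
Proof.
move=> HL; exists (fun _ => K), id; rewrite size_map; split.
- move=> i Hi; rewrite (nth_map 0) //.
  have Kp : 0 < K by lia.
  by rewrite Kp /= leq_pmulr // expn_gt0.
- move=> i j d Hi Hj /=.
  have -> : i %% K = i by apply: modn_small; lia.
  have -> : j %% K = j by apply: modn_small; lia.
  by move=> ->.
Qed.

Lemma sumn_filterC (f : nat -> nat) (p : pred nat) L :
  sumn (map f L) = sumn (map f (filter p L)) + sumn (map f (filter (predC p) L)).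
Proof.
elim: L => [|x L IH] //=; case: (p x) => /=; rewrite IH; lia.
Qed.

Lemma sumn_w_shift T L : all (fun e => e <= T) L ->
  sumn (map (fun e => 2 ^ (T.+1 - e)) L) = 2 * sumn (map (fun e => 2 ^ (T - e)) L).
Proof.
elim: L => [|x L IH] //= /andP [hx hL]; rewrite IH // subSn // expnS; lia.
Qed.

Lemma core K T : 0 < K -> forall L, all (fun e => e <= T) L ->
  sumn (map (fun e => 2 ^ (T - e)) L) <= K * 2 ^ T ->
  classable (map (fun e => K * 2 ^ e) L).
Proof.
move=> K0; elim: T => [|T IH] L HL HS.
  apply: classable_small.
  have <- : sumn (map (fun e => 2 ^ (0 - e)) L) = size L.
    by elim: L {HL HS} => [|x L IHL] //=; rewrite IHL.
  by rewrite expn0 muln1 in HS.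
set top := filter (pred1 T.+1) L.
set L' := filter (predC (pred1 T.+1)) L.
set n := size top.
have Htop : top = nseq n T.+1 by apply/all_pred1P; rewrite /top filter_all.
have HL' : all (fun e => e <= T) L'.
  apply/allP => x; rewrite /L' mem_filter /= => /andP [hx xL].
  have := allP HL x xL; rewrite leq_eqVlt (negbTE hx) /=; by [].
have HS' := HS; rewrite (sumn_filterC _ (pred1 T.+1)) -/top -/L' in HS'.
rewrite Htop map_nseq subnn expn0 sumn_nseq sumn_w_shift // in HS'.
set S := sumn _ in HS'.
set L2 := nseq (uphalf n) T ++ L'.
have HL2 : all (fun e => e <= T) L2 by rewrite all_cat HL' andbT; rewrite all_nseq /= leqnn orbT.
have HS2 : sumn (map (fun e => 2 ^ (T - e)) L2) <= K * 2 ^ T.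
  rewrite map_cat sumn_cat map_nseq subnn expn0 sumn_nseq -/S uphalf_half.
  rewrite expnS in HS'.
  move: HS'; case: (odd n) (odd_double_half n) => /= Hn; rewrite -Hn; move: (n./2) => h; lia.
have C2 := IH _ HL2 HS2.
rewrite map_cat map_nseq in C2.
have C3 := classable_double C2.
have C4 : classable (nseq n (2 * (K * 2 ^ T)) ++ map (fun e => K * 2 ^ e) L').
  move: C3; have := odd_double_half n; rewrite uphalf_half -muln2.
  case: (odd n) => Hn C3; simpl in Hn; move: C3.
  - rewrite (_ : 2 * (1 + n./2) = n.+1).
      by move=> H; apply: (@classable_drop (2 * (K * 2 ^ T))); exact: H.
    rewrite -{2}Hn; lia.
  - rewrite (_ : 2 * (0 + n./2) = n) //.
    rewrite -{2}Hn; lia.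
apply: (classable_perm C4).
have -> : 2 * (K * 2 ^ T) = K * 2 ^ T.+1 by rewrite expnS; lia.
have -> : nseq n (K * 2 ^ T.+1) = map (fun e => K * 2 ^ e) top by rewrite Htop map_nseq.
rewrite -map_cat; apply: perm_map.
by rewrite /top /L' perm_filterC.
Qed.

Local Open Scope ring_scope.
From mathcomp Require Import ring lra.

Section Real.
Variable R : realType.

Lemma rhoN_cons (x : nat) X : @rhoN R (x :: X) = (x%:R)^-1 + rhoN X.
Proof. by rewrite /rhoN big_cons. Qed.

Lemma rhoN_cat X Y : @rhoN R (X ++ Y) = rhoN X + rhoN Y.
Proof. by rewrite /rhoN big_cat. Qed.

Lemma rhoN_ge0 X : 0 <= @rhoN R X.
Proof. by rewrite /rhoN; apply: sumr_ge0 => i _; rewrite invr_ge0 ler0n. Qed.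

Lemma rho_scale K T L : (0 < K)%N -> all (fun e => e <= T)%N L ->
  @rhoN R (map (fun e => K * 2 ^ e)%N L) * ((K * 2 ^ T)%N)%:R =
  (sumn (map (fun e => 2 ^ (T - e))%N L))%:R.
Proof.
move=> K0; elim: L => [|x L IH] /=; first by rewrite /rhoN big_nil mul0r.
move=> /andP [hx hL]; rewrite rhoN_cons mulrDl IH // natrD; congr (_ + _).
have -> : (K * 2 ^ T = (K * 2 ^ x) * 2 ^ (T - x))%N by rewrite -mulnA -expnD subnKC.
rewrite (natrM _ (K * 2 ^ x)) mulKf //.
by rewrite pnatr_eq0 -lt0n muln_gt0 K0 expn_gt0.
Qed.

Lemma rho_32 L : @rhoN R (map (fun e => 3 * 2 ^ e)%N L) * (3 / 2) =
  rhoN (map (fun e => 2 * 2 ^ e)%N L).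
Proof.
elim: L => [|x L IH] /=; first by rewrite /rhoN !big_nil mul0r.
rewrite !rhoN_cons mulrDl IH; congr (_ + _).
rewrite !natrM.
have h : ((2 ^ x)%N%:R : R) != 0 by rewrite pnatr_eq0 -lt0n expn_gt0.
by field; rewrite h /=.
Qed.

Lemma rho_eq0 K L : (0 < K)%N -> @rhoN R (map (fun e => K * 2 ^ e)%N L) = 0 -> L = [::].
Proof.
move=> K0; case: L => [|x L] //=; rewrite rhoN_cons => H.
have h1 : 0 < ((K * 2 ^ x)%N%:R : R)^-1.
  by rewrite invr_gt0 ltr0n muln_gt0 K0 expn_gt0.
have h2 := rhoN_ge0 (map (fun e => K * 2 ^ e)%N L).
exfalso; lra.
Qed.

Lemma forms K (X : seq nat) : (forall x, x \in X -> exists e, x = (K * 2 ^ e)%N) ->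
  exists L, X = map (fun e => K * 2 ^ e)%N L.
Proof.
elim: X => [|x X IH] H; first by exists [::].
have [e ->] := H x (mem_head _ _).
have [L ->] : exists L, X = map (fun e => K * 2 ^ e)%N L.
  by apply: IH => y hy; apply: H; rewrite in_cons hy orbT.
by exists (e :: L).
Qed.

Lemma le_sumn L : all (fun e => e <= sumn L)%N L.
Proof.
apply/allP; elim: L => [|x L IH] //= y; rewrite in_cons => /orP [/eqP ->|hy].
  exact: leq_addr.
by apply: leq_trans (IH y hy) _; exact: leq_addl.
Qed.

Lemma final_sched X Y :
  (forall x, x \in X -> exists e, x = (2 * 2 ^ e)%N) ->
  (forall x, x \in Y -> exists e, x = (3 * 2 ^ e)%N) ->
  (@rhoN R X = 0 /\ @rhoN R Y <= 1) \/ (@rhoN R X + 3 / 2 * @rhoN R Y <= 1) ->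
  schedulable (X ++ Y).
Proof.
move=> /forms [L1 ->] /forms [L2 ->] [[H0 H1]|H].
- rewrite (rho_eq0 _ H0) //=.
  apply: classable_sched.
  apply: (@core 3 (sumn L2)) => //; first exact: le_sumn.
  rewrite -(ler_nat R) -(@rho_scale 3 (sumn L2) L2) //; last exact: le_sumn.
  rewrite -[X in _ <= X]mul1r; apply: ler_wpM2r => //.
- apply: classable_sched.
  have C := @core 2 (sumn (L1 ++ L2)) isT (L1 ++ L2) (le_sumn _).
  have : classable (map (fun e => 2 * 2 ^ e)%N (L1 ++ L2)).
    apply: C. rewrite -(ler_nat R) -(@rho_scale 2 (sumn (L1 ++ L2)) (L1 ++ L2)) //; last exact: le_sumn.
    rewrite -[X in _ <= X]mul1r; apply: ler_wpM2r => //.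
    rewrite map_cat rhoN_cat -(rho_32 L2); lra.
  move=> C2; apply: (classable_weaken C2); first by rewrite !size_map !size_cat !size_map.
  move=> i; rewrite map_cat size_cat !size_map => Hi.
  rewrite !nth_cat !size_map; case: ifP => // Hi1.
  have Hi2 : (i - size L1 < size L2)%N by lia.
  rewrite !(nth_map 0%N) //; rewrite leq_mul2r; lia.
Qed.

End Real.

Section Real2.
Variable R : realType.

Lemma spec_cons x (a : R) A b B : spec_seq x (a :: A) (b :: B) ->
  is_spec x a b /\ spec_seq x A B.
Proof.
case=> /= [[hs] H]; split; first exact: (H 0%N).
by split => // i Hi; exact: (H i.+1).
Qed.

Lemma spec_sum x (k : R) A B : spec_seq x A B ->
  (forall a b, a \in A -> is_spec x a b -> (b%:R)^-1 <= k * a^-1) ->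
  @rhoN R B <= k * rhoR A.
Proof.
elim: A B => [|a A IH] [|b B] //=.
- by move=> _ _; rewrite /rhoN /rhoR !big_nil mulr0.
- by case.
- by case.
move=> /spec_cons [h1 h2] H.
rewrite rhoN_cons /rhoR big_cons mulrDr -/(rhoR A).
apply: lerD; first by apply: H => //; exact: mem_head.
apply: IH => // a' b' ha' hs; apply: H => //; by rewrite in_cons ha' orbT.
Qed.

Lemma inv_helper (a b k : R) : 0 < a -> 0 < b -> a <= k * b -> b^-1 <= k * a^-1.
Proof.
move=> a0 b0 h; rewrite -subr_ge0.
have -> : k * a^-1 - b^-1 = (k * b - a) / (a * b).
  by field; rewrite ?gt_eqF //.
apply: divr_ge0; first lra.
by apply: mulr_ge0; apply: ltW.
Qed.

Lemma elem_bound x (k : R) a b : (0 < x)%N -> 0 <= k ->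
  (exists j, ((x * 2 ^ j)%N%:R <= a /\ a <= k * (x * 2 ^ j)%N%:R)) ->
  is_spec x a b -> (b%:R)^-1 <= k * a^-1.
Proof.
move=> x0 k0 [j [h1 h2]] [[j' ->] [hb hmax]].
have := hmax j h1 => hj.
have p1 : 0 < ((x * 2 ^ j)%N%:R : R) by rewrite ltr0n muln_gt0 x0 expn_gt0.
have p2 : 0 < ((x * 2 ^ j')%N%:R : R) by rewrite ltr0n muln_gt0 x0 expn_gt0.
apply: inv_helper; first lra; first done.
apply: (le_trans h2); apply: ler_wpM2l => //; by rewrite ler_nat.
Qed.

Lemma spec_form x (A : seq R) B : spec_seq x A B ->
  forall y, y \in B -> exists e, y = (x * 2 ^ e)%N.
Proof.
move=> [hs H] y /(nthP 0%N) [i Hi <-].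
have Hi' : (i < size A)%N by rewrite hs.
by have [[e ->] _] := H i Hi'; exists e.
Qed.

Lemma rhoR_map P : rhoR (map (fun q : nat => (q%:R : R)) P) = rhoN P.
Proof. by rewrite /rhoR /rhoN big_map. Qed.

Lemma P_bound (P P' : seq nat) : (forall y, y \in P -> exists e, y = (2 * 2 ^ e)%N) ->
  @spec_seqN R 3 P P' -> @rhoN R P' <= 4/3 * rhoN P.
Proof.
move=> H sP; have sP' : spec_seq 3 (map (fun q : nat => (q%:R : R)) P) P' := sP.
rewrite -(rhoR_map P); apply: (spec_sum sP') => a b /mapP [q hq ->] hs.
have [[|i] eq] := H q hq; rewrite eq in hs *.
- case: hs => [[j ->] [hb _]]; exfalso; move: hb; rewrite ler_nat expn0 muln1.
  by have := expn_gt0 2 j; lia.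
- apply: (elem_bound _ _ _ hs) => //; first lra.
  exists i; split; first by rewrite ler_nat expnS; lia.
  rewrite !expnS !natrM; lra.
Qed.

Lemma Q_bound (Q Q' : seq nat) : (forall y, y \in Q -> exists e, y = (3 * 2 ^ e)%N) ->
  @spec_seqN R 2 Q Q' -> @rhoN R Q' <= 3/2 * rhoN Q.
Proof.
move=> H sQ; have sQ' : spec_seq 2 (map (fun q : nat => (q%:R : R)) Q) Q' := sQ.
rewrite -(rhoR_map Q); apply: (spec_sum sQ') => a b /mapP [q hq ->] hs.
have [i eq] := H q hq; rewrite eq in hs *.
apply: (elem_bound _ _ _ hs) => //; first lra.
exists i; split; first by rewrite ler_nat; lia.
rewrite !natrM; lra.
Qed.

End Real2.

Unset Implicit Arguments.
Theorem theorem1 (R : realType) (A : seq R)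
    (A2 A3 : seq R) (B C P Bk Q Ck B' C' : seq nat) :
  (* A is a pseudo-instance with all periods >= 2 and density <= 7/12 *)
  (forall p, p \in A -> 2 <= p) ->
  rhoR A <= 7 / 12 ->
  (* split A = A2 + A3 *)
  perm_eq A (A2 ++ A3) ->
  (forall p, p \in A2 -> in_A2 p) ->
  (forall p, p \in A3 -> in_A3 p) ->
  (* B, C are the specializations of A2 w.r.t. {2} and A3 w.r.t. {3} *)
  spec_seq 2 A2 B ->
  spec_seq 3 A3 C ->
  (* chosen sub-multisets P of B and Q of C, with rho(B\P) = r/2, rho(C\Q) = s/3 *)
  perm_eq B (P ++ Bk) ->
  perm_eq C (Q ++ Ck) ->
  @rhoN R Bk = (Num.floor (2 * @rhoN R B))%:~R / 2 ->
  @rhoN R Ck = (Num.floor (3 * @rhoN R C))%:~R / 3 ->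
  (* B', C' result from normalization *)
  @normalization R B C P Bk Q Ck B' C' ->
  schedulable (B' ++ C').
Proof.
move=> Hge2 HrA pA HA2 HA3 sB sC pB pC HBk HCk Hn.
have rA : rhoR A = rhoR A2 + rhoR A3 by rewrite /rhoR (perm_big _ pA) big_cat.
have rB : rhoN B <= 3/2 * rhoR A2.
  apply: (spec_sum sB) => a b ha hs; apply: (elem_bound _ _ _ hs) => //; first lra.
  have [j [h1 h2]] := HA2 a ha; exists j; split => //.
  rewrite !natrM in h1 h2 *; lra.
have rC : rhoN C <= 4/3 * rhoR A3.
  apply: (spec_sum sC) => a b ha hs; apply: (elem_bound _ _ _ hs) => //; first lra.
  have [j [h1 h2]] := HA3 a ha; exists j; split => //.
  rewrite expnS !natrM in h1 h2 *; lra.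
have eB : rhoN B = rhoN P + rhoN Bk :> R by rewrite /rhoN (perm_big _ pB) big_cat.
have eC : rhoN C = rhoN Q + rhoN Ck :> R by rewrite /rhoN (perm_big _ pC) big_cat.
have gP := rhoN_ge0 R P.
have gQ := rhoN_ge0 R Q.
have gBk := rhoN_ge0 R Bk.
have gCk := rhoN_ge0 R Ck.
have f1 := floor_le (2 * rhoN B : R).
have f2 := floorD1_gt (2 * rhoN B : R).
have g1 := floor_le (3 * rhoN C : R).
have g2 := floorD1_gt (3 * rhoN C : R).
move: HBk HCk f1 f2 g1 g2.
move: (Num.floor (2 * rhoN B : R)) (Num.floor (3 * rhoN C : R)) => r s HBk HCk f1 f2 g1 g2.
rewrite intrD mulr1z in f2; rewrite intrD mulr1z in g2.
have hr : (r < 2)%R.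
  have h : (r%:~R : R) < 2 by lra.
  by rewrite -(ltr_int R).

have hr0 : r = 0 \/ r = 1.
  have h : (-1 < r)%R.
    have h : (-1 : R) < r%:~R  by lra.
    by rewrite -(ltr_int R).
  
  move: hr h; clear; lia.
have hs0 : s = 0 \/ s = 1 \/ s = 2.
  have hs : (s < 3)%R.
    have h : (s%:~R : R) < 3 by lra.
    by rewrite -(ltr_int R).
  have h : (-1 < s)%R.
    have h : (-1 : R) < s%:~R  by lra.
    by rewrite -(ltr_int R).
  move: hs h; clear; lia.
have hr1 : (r%:~R : R) = 0 \/ (r%:~R : R) = 1 by case: hr0 => ->; [left|right].
have hs1 : (s%:~R : R) = 0 \/ (s%:~R : R) = 1 \/ (s%:~R : R) = 2.
  by case: hs0 => [->|[->|->]]; [left|right; left|right; right].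
clear hr0 hs0 f1 g1.
have fB := spec_form sB.
have fC := spec_form sC.
have fBk : forall y, y \in Bk -> exists e, y = (2 * 2 ^ e)%N.
  by move=> y hy; apply: fB; rewrite (perm_mem pB) mem_cat hy orbT.
have fP : forall y, y \in P -> exists e, y = (2 * 2 ^ e)%N.
  by move=> y hy; apply: fB; rewrite (perm_mem pB) mem_cat hy.
have fCk : forall y, y \in Ck -> exists e, y = (3 * 2 ^ e)%N.
  by move=> y hy; apply: fC; rewrite (perm_mem pC) mem_cat hy orbT.
have fQ : forall y, y \in Q -> exists e, y = (3 * 2 ^ e)%N.
  by move=> y hy; apply: fC; rewrite (perm_mem pC) mem_cat hy.
have fcat : forall K (X Y : seq nat), (forall y, y \in X -> exists e, y = (K * 2 ^ e)%N) ->
    (forall y, y \in Y -> exists e, y = (K * 2 ^ e)%N) ->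
    (forall y, y \in X ++ Y -> exists e, y = (K * 2 ^ e)%N).
  by move=> K X Y h1 h2 y; rewrite mem_cat => /orP [/h1|/h2].
have pos : @rhoN R P + @rhoN R Q != 0 -> 0 < @rhoN R P + @rhoN R Q.
  by move=> h; rewrite lt0r h /= addr_ge0.
have fin : forall (X Y : seq nat), (forall x, x \in X -> exists e, x = (2 * 2 ^ e)%N) ->
  (forall x, x \in Y -> exists e, x = (3 * 2 ^ e)%N) ->
  (@rhoN R X = 0 /\ @rhoN R Y <= 1) \/ (@rhoN R X + 3 / 2 * @rhoN R Y <= 1) ->
  schedulable (X ++ Y) := @final_sched R.
rewrite /normalization in Hn.
case: Hn => [[h0 [-> ->]] | [[h0 [ha [P' [sP [-> ->]]]]] | [[h0 [hb1 [hb2 [hb3 [Q' [sQ [-> ->]]]]]]] | [[h0 [hc1 [hc2 [hc3 [P' [sP [-> ->]]]]]]] | [h0 [hd [-> ->]]]]]]].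
- apply: fin => //.
  case: hr1 => er; case: hs1 => [es|[es|es]]; first [by left; split; lra | by right; lra].
- 
  have := pos h0 => {}h0.
  have rP' := P_bound fP sP.
  apply: fin => //; first exact: fcat fC (spec_form sP).
  rewrite rhoN_cat.
  case: hr1 => er; case: hs1 => [es|[es|es]]; first [by left; split; lra | by right; lra].
- 
  have := pos h0 => {}h0.
  have rQ' := Q_bound fQ sQ.
  apply: fin => //; first exact: fcat fB (spec_form sQ).
  rewrite rhoN_cat.
  case: hr1 => er; case: hs1 => [es|[es|es]]; first [by left; split; lra | by right; lra].
- 
  have := pos h0 => {}h0.
  have rP' := P_bound fP sP.
  apply: fin => //; first exact: fcat fC (spec_form sP).
  rewrite rhoN_cat.
  case: hr1 => er; case: hs1 => [es|[es|es]]; first [by left; split; lra | by right; lra].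
- 
  have := pos h0 => {}h0.
  apply: fin => //.
  case: hr1 => er; case: hs1 => [es|[es|es]]; first [by left; split; lra | by right; lra].
Qed.
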